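(* For a liner $X$ the following are equivalent: (1) $X$ is Proclus; (2) $X$ is proaffine and $3$-proregular; (3) for every line $L\subseteq X$ and points $o\in L$, $x\in X\setminus L$, $y\in\overline{L\cup\{x\}}$, the set $\{v\in\overline{ox}:\overline{vy}\cap L=\varnothing\}$ contains at most one point.
   Context: A liner is a set $X$ of points with a family of subsets called lines such that any two distinct points lie in a unique line and every line contains at least two points. For distinct $x,y$, $\overline{xy}$ is the line through them and $\overline{xx}:=\{x\}$. A set is flat if it contains $\overline{xy}$ for all its distinct points; $\overline A$ is the smallest flat containing $A$; the rank $\|A\|$ is the smallest cardinality of $B\subseteq X$ with $A\subseteq\overline B$; a plane is a flat of rank 3. $X$ is Proclus if for every plane $P$, line $L\subseteq P$ and point $x\in P\setminus L$ there is at most one line $\Lambda$ with $x\in\Lambda\subseteq P\setminus L$. $X$ is proaffine if for all $o,x,y\in X$ and $p\in\overline{xy}\setminus\overline{ox}$ there exists $u\in\overline{oy}$ such that $\overline{vp}\cap\overline{ox}\ne\varnothing$ for every $v\in\overline{oy}\setminus\{u\}$. $X$ is $3$-proregular if for every set $A\subseteq X$ with $|A|<3$ and all points $o\in\overline A$, $p\in X\setminus\overline A$ with $\overline{op}\ne\{o,p\}$, we have $\overline{\{p\}\cup A}=\bigcup_{u\in\overline{op}}\bigcup_{a\in\overline A}\overline{ua}$. *)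

(* Defs.v *)
From Stdlib Require Import List.
Import ListNotations.

Section Liner.
Variable X : Type.
Variable Lines : (X -> Prop) -> Prop.

Definition set_eq (A B : X -> Prop) : Prop := forall z, A z <-> B z.
Definition subset (A B : X -> Prop) : Prop := forall z, A z -> B z.

Definition is_liner : Prop :=
  (forall L, Lines L -> exists a b, a <> b /\ L a /\ L b) /\
  (forall x y, x <> y -> exists L, Lines L /\ L x /\ L y) /\
  (forall x y L1 L2, x <> y -> Lines L1 -> Lines L2 ->
     L1 x -> L1 y -> L2 x -> L2 y -> set_eq L1 L2).

(* line through x and y; {x} when x = y *)
Definition line_through (x y : X) : X -> Prop := fun z =>
  (x = y /\ z = x) \/ (x <> y /\ exists L, Lines L /\ L x /\ L y /\ L z).

Definition flat (A : X -> Prop) : Prop :=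
  forall x y, A x -> A y -> subset (line_through x y) A.

Definition hull (A : X -> Prop) : X -> Prop := fun z =>
  forall F, flat F -> subset A F -> F z.

Definition of_list (B : list X) : X -> Prop := fun z => In z B.

Definition rank_le (A : X -> Prop) (n : nat) : Prop :=
  exists B : list X, length B <= n /\ subset A (hull (of_list B)).

Definition rank_eq (A : X -> Prop) (n : nat) : Prop :=
  rank_le A n /\ forall m, m < n -> ~ rank_le A m.

Definition is_plane (P : X -> Prop) : Prop := flat P /\ rank_eq P 3.

Definition Proclus : Prop :=
  forall P L x, is_plane P -> Lines L -> subset L P -> P x -> ~ L x ->
  forall Λ1 Λ2, Lines Λ1 -> Lines Λ2 ->
    Λ1 x -> subset Λ1 (fun z => P z /\ ~ L z) ->
    Λ2 x -> subset Λ2 (fun z => P z /\ ~ L z) ->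
    set_eq Λ1 Λ2.

Definition proaffine : Prop :=
  forall o x y p, line_through x y p -> ~ line_through o x p ->
  exists u, line_through o y u /\
    forall v, line_through o y v -> v <> u ->
      exists w, line_through v p w /\ line_through o x w.

(* 3-proregular: sets A with |A| < 3 are represented by lists of length <= 2 *)
Definition proregular3 : Prop :=
  forall (A : list X) o p, length A < 3 ->
    hull (of_list A) o -> ~ hull (of_list A) p ->
    ~ set_eq (line_through o p) (fun z => z = o \/ z = p) ->
    set_eq (hull (fun z => z = p \/ In z A))
           (fun z => exists u a, line_through o p u /\ hull (of_list A) a /\
                                 line_through u a z).

Definition condition3 : Prop :=
  forall L o x y, Lines L -> L o -> ~ L x ->
    hull (fun z => L z \/ z = x) y ->
    forall v1 v2,
      (line_through o x v1 /\ ~ exists w, line_through v1 y w /\ L w) ->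
      (line_through o x v2 /\ ~ exists w, line_through v2 y w /\ L w) ->
      v1 = v2.

End Liner.

(* Main.v *)
Require Import Defs.
From Stdlib Require Import List Classical Lia.
Import ListNotations.

Section S.
Variable X : Type.
Variable Lines : (X -> Prop) -> Prop.
Hypothesis HL : is_liner X Lines.
Local Notation lt := (line_through X Lines).
Local Notation hl := (hull X Lines).
Definition T3 (a b c : X) : X -> Prop := fun z => z = a \/ z = b \/ z = c.
Definition nc (p q r : X) : Prop := p <> q /\ ~ lt p q r.

Lemma ax1 : forall L, Lines L -> exists a b, a <> b /\ L a /\ L b.
Proof. destruct HL as [h _]; exact h. Qed.
Lemma ax2 : forall x y, x <> y -> exists L, Lines L /\ L x /\ L y.
Proof. destruct HL as [_ [h _]]; exact h. Qed.
Lemma ax3 : forall x y L1 L2, x <> y -> Lines L1 -> Lines L2 ->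
  L1 x -> L1 y -> L2 x -> L2 y -> forall z, L1 z <-> L2 z.
Proof. destruct HL as [_ [_ h]]; exact h. Qed.

Lemma lt_aa : forall a z, lt a a z <-> z = a.
Proof. intros; unfold line_through; split.
 - intros [[_ H]|[H _]]; [exact H| congruence].
 - intros ->; left; auto. Qed.

Lemma lt_ne : forall x y z, x <> y -> (lt x y z <-> exists L, Lines L /\ L x /\ L y /\ L z).
Proof. intros x y z Hne; unfold line_through; split.
 - intros [[H1 _]|[_ H1]]; [congruence|exact H1].
 - intros H1; right; auto. Qed.

Lemma line_lt : forall L x y, Lines L -> L x -> L y -> x <> y -> forall z, L z <-> lt x y z.
Proof. intros L x y HLn Hx Hy Hne z. rewrite lt_ne by auto. split.
 - intros Hz; exists L; auto.
 - intros [L' [HL' [Hx' [Hy' Hz']]]]. apply (ax3 x y L' L); auto. Qed.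

Lemma lt_in : forall L p q z, Lines L -> L p -> L q -> lt p q z -> L z.
Proof. intros L p q z HLn Hp Hq Hz. destruct (classic (p = q)) as [<-|Hne].
 - apply lt_aa in Hz; subst; auto.
 - apply (line_lt L p q); auto. Qed.

Lemma lines_flat : forall L, Lines L -> flat X Lines L.
Proof. intros L HLn x y Hx Hy z Hz. exact (lt_in L x y z HLn Hx Hy Hz). Qed.

Lemma lt_line : forall x y, x <> y -> exists L, Lines L /\ L x /\ L y /\ forall z, L z <-> lt x y z.
Proof. intros x y Hne. destruct (ax2 x y Hne) as [L [? [? ?]]]. exists L; repeat split; auto;
  intros; apply (line_lt L x y); auto. Qed.

Lemma lt_l : forall x y, lt x y x.
Proof. intros. destruct (classic (x = y)) as [<-|Hne]. apply lt_aa; auto.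
 destruct (lt_line x y Hne) as [L [_ [Hx [_ HL']]]]. apply HL'; auto. Qed.
Lemma lt_r : forall x y, lt x y y.
Proof. intros. destruct (classic (x = y)) as [<-|Hne]. apply lt_aa; auto.
 destruct (lt_line x y Hne) as [L [_ [_ [Hy HL']]]]. apply HL'; auto. Qed.
Lemma lt_sym : forall x y z, lt x y z -> lt y x z.
Proof. intros x y z. destruct (classic (x=y)) as [<-|Hne]; auto.
 rewrite !lt_ne by auto. intros [L ?]; exists L; tauto. Qed.

Lemma lt_change : forall x y a b, x <> y -> lt x y a -> lt x y b -> a <> b ->
  forall z, lt a b z <-> lt x y z.
Proof. intros x y a b Hne Ha Hb Hab z. destruct (lt_line x y Hne) as [L [HLn [_ [_ HLe]]]].
 rewrite <- HLe. symmetry. apply line_lt; auto; apply HLe; auto. Qed.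

Lemma lt_flat : forall x y, flat X Lines (lt x y).
Proof. intros x y a b Ha Hb z Hz.
 destruct (classic (x = y)) as [<-|Hne].
 - apply lt_aa in Ha; apply lt_aa in Hb; subst. exact Hz.
 - destruct (classic (a = b)) as [<-|Hab].
   + apply lt_aa in Hz; subst; auto.
   + apply (lt_change x y a b); auto. Qed.

Lemma hull_incl : forall A z, A z -> hl A z.
Proof. intros A z Hz F _ HF. apply HF; auto. Qed.
Lemma hull_min : forall A F, flat X Lines F -> subset X A F -> forall z, hl A z -> F z.
Proof. intros A F HF HAF z Hz. apply Hz; auto. Qed.
Lemma hull_flat : forall A, flat X Lines (hl A).
Proof. intros A x y Hx Hy z Hz F HF HAF. exact (HF x y (Hx F HF HAF) (Hy F HF HAF) z Hz). Qed.
Lemma hull_lt : forall A x y z, hl A x -> hl A y -> lt x y z -> hl A z.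
Proof. intros A x y z Hx Hy Hz. exact (hull_flat A x y Hx Hy z Hz). Qed.
Lemma hull_mono : forall (A B : X -> Prop), (forall z, A z -> B z) -> forall z, hl A z -> hl B z.
Proof. intros A B HAB z Hz. apply (hull_min A (hl B)); auto. apply hull_flat.
  intros w Hw; apply hull_incl; auto. Qed.

Lemma hull2 : forall a b z, hl (of_list X [a;b]) z <-> lt a b z.
Proof. split.
 - apply hull_min. apply lt_flat. intros w [<-|[<-|[]]]; [apply lt_l|apply lt_r].
 - intros Hz. apply (hull_lt _ a b); auto; apply hull_incl; simpl; auto. Qed.

Lemma flat_pt : forall a, flat X Lines (fun w => w = a).
Proof. intros a x y Hx Hy z Hz. subst. apply lt_aa in Hz; auto. Qed.

Lemma hull1 : forall a z, hl (of_list X [a]) z -> z = a.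
Proof. intros a. apply hull_min. apply flat_pt. intros w [<-|[]]; auto. Qed.

Lemma hull0 : forall z, hl (of_list X []) z -> False.
Proof. apply hull_min. intros x y [] . intros w []. Qed.

Lemma T_perm : forall a b c a' b' c', (forall z, T3 a b c z -> T3 a' b' c' z) ->
  forall w, hl (T3 a b c) w -> hl (T3 a' b' c') w.
Proof. intros. apply (hull_mono (T3 a b c)); auto. Qed.

Lemma nc_sym1 : forall p q r, nc p q r -> nc q p r.
Proof. intros p q r [H1 H2]; split; auto. intro H; apply H2; apply lt_sym; auto. Qed.

Lemma nc_sym2 : forall p q r, nc p q r -> nc p r q.
Proof. intros p q r [H1 H2].
 assert (Hpr : p <> r). { intro; subst; apply H2; apply lt_l. }
 split; auto. intro H. apply H2.
 apply (lt_change p r p q Hpr (lt_l _ _) H H1). apply lt_r. Qed.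

Lemma nc_line : forall a b c p q, nc a b c -> lt p q a -> lt p q b -> lt p q c -> False.
Proof. intros a b c p q [Hab Hc] Ha Hb Hcc.
 destruct (classic (p = q)) as [<-|Hpq].
 - apply lt_aa in Ha; apply lt_aa in Hb; congruence.
 - apply Hc. apply (lt_change p q a b); auto. Qed.

Lemma flat2 : forall (K : X -> Prop) c, flat X Lines K ->
 ~ (exists o q, K o /\ lt o c q /\ q <> o /\ q <> c) -> flat X Lines (fun w => K w \/ w = c).
Proof.
 intros K c HK Hno x y Hx Hy w Hw.
 destruct Hx as [Hx| ->]; destruct Hy as [Hy| ->].
 - left; exact (HK x y Hx Hy w Hw).
 - destruct (classic (w = x)) as [->|Hwx]; [left; auto|].
   destruct (classic (w = c)) as [->|Hwc]; [right; auto|].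
   exfalso; apply Hno; exists x, w; auto.
 - destruct (classic (w = y)) as [->|Hwx]; [left; auto|].
   destruct (classic (w = c)) as [->|Hwc]; [right; auto|].
   exfalso; apply Hno; exists y, w; split; auto; split; auto; apply lt_sym; auto.
 - right; apply lt_aa in Hw; auto.
Qed.

Lemma hullLx : forall L p q r, Lines L -> L p -> L q -> p <> q ->
  forall z, hl (fun w => L w \/ w = r) z <-> hl (T3 p q r) z.
Proof. intros L p q r HLn Hp Hq Hpq z. split.
 - apply hull_min. apply hull_flat. intros w [Hw| ->].
   + apply (hull_lt _ p q); try (apply hull_incl; unfold T3; auto).
     apply (line_lt L p q); auto.
   + apply hull_incl; unfold T3; auto.
 - apply hull_mono. intros w [->|[->| ->]]; auto.
Qed.

Lemma E : proregular3 X Lines -> forall a b c z, nc a b c -> hl (T3 a b c) z -> ~ lt a b z ->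
  forall w, hl (T3 a b c) w -> hl (T3 a b z) w.
Proof.
 intros PR a b c z [Hab Hc] Hz Hzn.
 assert (Hcz: hl (T3 a b z) c).
 { destruct (classic (exists o q, lt a b o /\ lt o c q /\ q <> o /\ q <> c))
     as [[o [q [Ho [Hq [Hqo Hqc]]]]]|Hno].
   - pose proof (PR [a;b] o c) as Hp.
     assert (Hoc : o <> c) by (intro; subst; auto).
     specialize (Hp ltac:(simpl; lia) (proj2 (hull2 a b o) Ho)
       (fun h => Hc (proj1 (hull2 a b c) h))).
     assert (Hns : ~ set_eq X (lt o c) (fun z => z = o \/ z = c)).
     { intro Hs. destruct (proj1 (Hs q) Hq); contradiction. }
     specialize (Hp Hns).
     assert (Hz' : hl (fun w => w = c \/ In w [a;b]) z).
     { apply (hull_mono (T3 a b c)); auto. intros w [->|[->| ->]]; simpl; auto. }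
     destruct (proj1 (Hp z) Hz') as [u [l [Hu [Hl Hul]]]].
     apply hull2 in Hl.
     assert (Hu' : ~ lt a b u).
     { intro Hu'. destruct (classic (u = o)) as [->|Huo].
       - apply Hzn. exact (lt_flat a b o l Ho Hl z Hul).
       - apply Hc. assert (Hou : lt o u c).
         { apply (lt_change o c o u Hoc (lt_l _ _) Hu); auto. apply lt_r. }
         exact (lt_flat a b o u Ho Hu' c Hou). }
     assert (Hul' : u <> l) by (intro; subst; auto).
     assert (Hzl : z <> l) by (intro; subst; auto).
     assert (Huo : u <> o) by (intro; subst; auto).
     assert (Ha : hl (T3 a b z) a) by (apply hull_incl; unfold T3; auto).
     assert (Hb : hl (T3 a b z) b) by (apply hull_incl; unfold T3; auto).
     assert (Hzz : hl (T3 a b z) z) by (apply hull_incl; unfold T3; auto).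
     assert (Hlh : hl (T3 a b z) l) by (apply (hull_lt _ a b); auto).
     assert (Hoh : hl (T3 a b z) o) by (apply (hull_lt _ a b); auto).
     assert (Huh : hl (T3 a b z) u).
     { apply (hull_lt _ z l); auto. apply (lt_change u l z l Hul' Hul (lt_r _ _) Hzl). apply lt_l. }
     apply (hull_lt _ o u); auto.
     apply (lt_change o c o u Hoc (lt_l _ _) Hu); auto. apply lt_r.
   - assert (Hf : flat X Lines (fun w => lt a b w \/ w = c)) by (apply flat2; auto; apply lt_flat).
     assert (Hz2 : lt a b z \/ z = c).
     { apply (hull_min (T3 a b c) _ Hf); auto. intros w [->|[->| ->]]; auto; left; [apply lt_l|apply lt_r]. }
     destruct Hz2 as [Hz2| ->]; [contradiction|]. apply hull_incl; unfold T3; auto. }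
 apply hull_min. apply hull_flat. intros w [->|[->| ->]]; auto; apply hull_incl; unfold T3; auto.
Qed.

Lemma S2 : proregular3 X Lines -> forall d p q e, nc d p q -> hl (T3 d p q) e -> e <> d ->
  exists s, nc d e s /\ forall w, hl (T3 d p q) w -> hl (T3 d e s) w.
Proof.
 intros PR d p q e Hn He Hed.
 destruct (classic (lt d p e)) as [Hdp|Hdp].
 - assert (Hdq: ~ lt d q e).
   { intro Hdq. destruct Hn as [Hdpne Hq]. apply Hq.
     assert (Hdq' : d <> q) by (destruct (nc_sym2 _ _ _ (conj Hdpne Hq)); auto).
     pose proof (lt_change d p d e Hdpne (lt_l _ _) Hdp (fun h => Hed (eq_sym h))) as E1.
     pose proof (lt_change d q d e Hdq' (lt_l _ _) Hdq (fun h => Hed (eq_sym h))) as E2.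
     apply E1. apply E2. apply lt_r. }
   exists q. pose proof (nc_sym2 _ _ _ Hn) as Hn2.
   split.
   + apply nc_sym2. split; auto. destruct Hn2; auto.
   + intros w Hw.
     assert (He' : hl (T3 d q p) e) by (apply (T_perm d p q); auto; unfold T3; tauto).
     apply (T_perm d q e). unfold T3; tauto.
     apply (E PR d q p e); auto. apply (T_perm d p q); auto; unfold T3; tauto.
 - exists p. split.
   + apply nc_sym2. split; auto. destruct Hn; auto.
   + intros w Hw. apply (T_perm d p e). unfold T3; tauto.
     apply (E PR d p q e); auto.
Qed.

Lemma S1 : proregular3 X Lines -> forall a b c d, nc a b c -> hl (T3 a b c) d ->
  exists p q, nc d p q /\ forall w, hl (T3 a b c) w -> hl (T3 d p q) w.
Proof.
 intros PR a b c d Hn Hd. destruct (classic (d = a)) as [->|Hda].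
 - exists b, c; auto.
 - destruct (S2 PR a b c d Hn Hd Hda) as [s [Hs Hsub]].
   exists a, s. split. apply nc_sym1; auto.
   intros w Hw. apply (T_perm a d s). unfold T3; tauto. auto.
Qed.

Lemma G : proregular3 X Lines -> forall a b c d e f, nc a b c ->
  hl (T3 a b c) d -> hl (T3 a b c) e -> hl (T3 a b c) f -> nc d e f ->
  forall w, hl (T3 a b c) w -> hl (T3 d e f) w.
Proof.
 intros PR a b c d e f Hn Hd He Hf Hdef w Hw.
 destruct (S1 PR a b c d Hn Hd) as [p [q [Hpq Hs1]]].
 assert (Hed : e <> d) by (destruct Hdef; auto).
 destruct (S2 PR d p q e Hpq (Hs1 _ He) Hed) as [s [Hs Hs2]].
 apply (E PR d e s f Hs). auto. destruct Hdef; auto. auto.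
Qed.

Lemma list3 : forall (x0 : X) (B : list X), length B <= 3 ->
  (exists p q, forall z, hl (of_list X B) z -> lt p q z) \/
  (exists a b c, nc a b c /\ forall z, hl (of_list X B) z -> hl (T3 a b c) z).
Proof.
 intros x0 B Hlen. destruct B as [|a [|b [|c [|d B]]]].
 - left; exists x0, x0; intros z Hz; exfalso; exact (hull0 z Hz).
 - left; exists a, a; intros z Hz; apply hull1 in Hz; subst; apply lt_l.
 - left; exists a, b; intros z Hz; apply hull2; auto.
 - destruct (classic (a = b)) as [<-|Hab].
   + left; exists a, c. apply hull_min. apply lt_flat.
     intros w [<-|[<-|[<-|[]]]]; [apply lt_l|apply lt_l|apply lt_r].
   + destruct (classic (lt a b c)) as [Hc|Hc].
     * left; exists a, b. apply hull_min. apply lt_flat.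
       intros w [<-|[<-|[<-|[]]]]; [apply lt_l|apply lt_r|auto].
     * right; exists a, b, c; split. split; auto.
       apply hull_mono. intros w [<-|[<-|[<-|[]]]]; unfold T3; auto.
 - simpl in Hlen; lia.
Qed.

Lemma list2 : forall (x0 : X) (B : list X), length B <= 2 ->
  exists p q, forall z, hl (of_list X B) z -> lt p q z.
Proof.
 intros x0 B Hlen. destruct B as [|a [|b [|c B]]].
 - exists x0, x0; intros z Hz; exfalso; exact (hull0 z Hz).
 - exists a, a; intros z Hz; apply hull1 in Hz; subst; apply lt_l.
 - exists a, b; intros z Hz; apply hull2; auto.
 - simpl in Hlen; lia.
Qed.

Lemma T2p : condition3 X Lines -> proaffine X Lines.
Proof.
 intros C o x y p Hp Hnp.
 assert (Hxy: x <> y).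
 { intro; subst. apply lt_aa in Hp; subst. apply Hnp, lt_r. }
 assert (Huniq: forall u v, lt o y u -> lt o y v -> ~(exists w, lt u p w /\ lt o x w) ->
   ~(exists w, lt v p w /\ lt o x w) -> u = v).
 { intros u v Hu Hv Hpu Hpv.
   destruct (classic (o = x)) as [<-|Hox].
   - assert (Ht: forall t, lt o y t -> ~(exists w, lt t p w /\ lt o o w) -> t = p).
     { intros t Ht Hpt. apply NNPP; intro Htp. apply Hpt. exists o. split; [|apply lt_aa; auto].
       apply (lt_change o y t p Hxy Ht Hp Htp). apply lt_l. }
     rewrite (Ht u), (Ht v); auto.
   - destruct (lt_line o x Hox) as [K [HK [HKo [HKx HKe]]]].
     apply (C K o y p HK HKo).
     + intro Hy. apply Hnp. apply HKe in Hy.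
       apply (lt_change o x x y Hox (lt_r _ _) Hy Hxy). auto.
     + apply (hull_lt _ x y); auto; apply hull_incl; auto.
     + split; auto. intros [w [Hw1 Hw2]]; apply Hpu; exists w; split; auto; apply HKe; auto.
     + split; auto. intros [w [Hw1 Hw2]]; apply Hpv; exists w; split; auto; apply HKe; auto. }
 destruct (classic (exists u, lt o y u /\ ~ exists w, lt u p w /\ lt o x w)) as [[u [Hu Hpu]]|Hno].
 - exists u; split; auto. intros v Hv Hvu. apply NNPP; intro Hpv. apply Hvu. apply Huniq; auto.
 - exists o. split. apply lt_l. intros v Hv _. apply NNPP; intro Hpv. apply Hno; exists v; auto.
Qed.

Lemma T3p : condition3 X Lines -> proregular3 X Lines.
Proof.
 intros C A o p HA Ho Hp Hnp.
 assert (exists q, lt o p q /\ q <> o /\ q <> p) as [q [Hq [Hqo Hqp]]].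
 { apply NNPP; intro Hn. apply Hnp. intro z; split.
   - intro Hz. destruct (classic (z = o)); [left; auto|]. destruct (classic (z=p)); [right; auto|].
     exfalso; apply Hn; exists z; auto.
   - intros [-> | ->]; [apply lt_l|apply lt_r]. }
 assert (Hpt : forall a, (forall z, hl (of_list X A) z -> z = a) -> hl (of_list X A) a ->
    (forall z, In z A -> z = a) ->
    forall z, hl (fun z => z = p \/ In z A) z -> exists u a0, lt o p u /\ hl (of_list X A) a0 /\ lt u a0 z).
 { intros a Ha1 Ha2 Ha3 z Hz. assert (o = a) by auto. subst o.
   exists z, a. split; [|split; auto; apply lt_l].
   revert z Hz. apply hull_min. apply lt_flat. intros w [->|Hw]; [apply lt_r|].
   rewrite (Ha3 w Hw); apply lt_l. }
 intro z; split.
 - intro Hz. destruct A as [|a [|b [|c A']]].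
   + exfalso; exact (hull0 o Ho).
   + apply (Hpt a); auto. apply hull1. apply hull_incl; simpl; auto.
     intros w [<-|[]]; auto.
   + apply hull2 in Ho. destruct (classic (a = b)) as [<-|Hab].
     * apply (Hpt a); auto. intros w Hw; apply hull2, lt_aa in Hw; auto.
       apply hull_incl; simpl; auto. intros w [<-|[<-|[]]]; auto.
     * destruct (lt_line a b Hab) as [K [HK [HKa [HKb HKe]]]].
       destruct (classic (lt o p z)) as [Hz'|Hz'].
       -- exists z, o. split; auto. split. apply hull2; auto. apply lt_l.
       -- assert (Hpo : p <> o). { intro; subst. apply Hp, hull2; auto. }
          assert (exists v w, lt o p v /\ v <> o /\ lt v z w /\ K w) as [v [w [Hv [Hvo [Hvzw Kw]]]]].
          { apply NNPP; intro Hn. apply Hqp.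
            apply (C K o p z HK (proj2 (HKe o) Ho)).
            - intro Hk. apply Hp. apply hull2, HKe; auto.
            - apply (hull_mono (fun z => z = p \/ In z [a;b])); auto.
              intros w [->|[<-|[<-|[]]]]; auto.
            - split; auto. intros [w [Hw1 Hw2]]. apply Hn; exists q, w; auto.
            - split; [apply lt_r|]. intros [w [Hw1 Hw2]]. apply Hn; exists p, w; repeat split; auto; apply lt_r. }
          exists v, w. split; auto. split. apply hull2, HKe; auto.
          assert (Hvz : v <> z) by (intro; subst; auto).
          assert (Hvw : v <> w).
          { intro; subst w. apply Hp. apply hull2. apply HKe.
            apply (lt_in K o v); auto. apply HKe; auto.
            apply (lt_change o p o v (fun h => Hpo (eq_sym h)) (lt_l _ _) Hv (fun h => Hvo (eq_sym h))). apply lt_r. }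
          apply (lt_change v z v w Hvz (lt_l _ _) Hvzw Hvw). apply lt_r.
   + simpl in HA; lia.
 - intros [u [a [Hu [Ha Hz]]]].
   assert (HAs : forall w, hl (of_list X A) w -> hl (fun z => z = p \/ In z A) w).
   { apply hull_mono. intros; right; auto. }
   apply (hull_lt _ u a); auto.
   apply (hull_lt _ o p); auto. apply hull_incl; auto.
Qed.

Lemma T4p : proaffine X Lines -> proregular3 X Lines -> condition3 X Lines.
Proof.
 intros PA PR L o x y HLn Ho Hx Hy v1 v2 [Hv1 Hp1] [Hv2 Hp2].
 apply NNPP; intro Hne.
 destruct (ax1 L HLn) as [l1 [l2 [Hl12 [Hl1 Hl2]]]].
 assert (Hox : o <> x) by (intro; subst; auto).
 assert (Hvo: forall v, ~(exists w, lt v y w /\ L w) -> v <> o).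
 { intros v Hv ->. apply Hv; exists o; split; [apply lt_l| auto]. }
 destruct (classic (exists q, lt o x q /\ q <> o /\ q <> x)) as [[q [Hq [Hqo Hqx]]]|Hnq].
 - pose proof (line_lt L l1 l2 HLn Hl1 Hl2 Hl12) as HLe.
   pose proof (PR [l1;l2] o x) as Hpr.
   assert (Hns : ~ set_eq X (lt o x) (fun z => z = o \/ z = x)).
   { intro Hs. destruct (proj1 (Hs q) Hq); contradiction. }
   specialize (Hpr ltac:(simpl; lia) (proj2 (hull2 _ _ _) (proj1 (HLe o) Ho))
     (fun h => Hx (proj2 (HLe x) (proj1 (hull2 _ _ _) h))) Hns).
   assert (Hy' : hl (fun z => z = x \/ In z [l1;l2]) y).
   { pose proof (proj1 (hullLx L l1 l2 x HLn Hl1 Hl2 Hl12 y) Hy) as Hy2.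
     apply (hull_mono (T3 l1 l2 x)); auto. intros w [->|[->| ->]]; simpl; auto. }
   destruct (proj1 (Hpr y) Hy') as [u [l [Hu [Hl Hul]]]].
   assert (Hl' : L l) by (apply HLe, hull2; auto).
   assert (Huo : u <> o).
   { intro; subst u. apply Hp1. exists y; split. apply lt_r.
     apply (lt_in L o l); auto. }
   assert (Hnoly : ~ lt o l y).
   { intro h. apply Hp1. exists y; split. apply lt_r. apply (lt_in L o l); auto. }
   destruct (PA o l u y (lt_sym _ _ _ Hul) Hnoly) as [us [Hus Hall]].
   pose proof (lt_change o x o u Hox (lt_l _ _) Hu (fun h => Huo (eq_sym h))) as Eq.
   destruct (classic (v1 = us)) as [->|Hv1u].
   + assert (Hv2u : v2 <> us) by auto.
     destruct (Hall v2 (proj2 (Eq v2) Hv2) Hv2u) as [w [Hw1 Hw2]].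
     apply Hp2; exists w; split; auto. apply (lt_in L o l); auto.
   + destruct (Hall v1 (proj2 (Eq v1) Hv1) Hv1u) as [w [Hw1 Hw2]].
     apply Hp1; exists w; split; auto. apply (lt_in L o l); auto.
 - assert (Hxv : forall v, lt o x v -> ~(exists w, lt v y w /\ L w) -> v = x).
   { intros v Hv Hpv. apply NNPP; intro h. apply Hnq. exists v; repeat split; auto. }
   apply Hne. rewrite (Hxv v1), (Hxv v2); auto.
Qed.

Lemma T1p : Proclus X Lines -> condition3 X Lines.
Proof.
 intros Pr L o x y HLn Ho Hx Hy v1 v2 [Hv1 Hp1] [Hv2 Hp2].
 apply NNPP; intro Hne.
 destruct (ax1 L HLn) as [l1 [l2 [Hl12 [Hl1 Hl2]]]].
 assert (Hox : o <> x) by (intro; subst; auto).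
 assert (HyL : ~ L y) by (intro; apply Hp1; exists y; split; [apply lt_r|auto]).
 assert (key: forall v1 v2, lt o x v1 -> lt o x v2 -> v1 <> v2 ->
     ~ (exists w, lt v2 y w /\ L w) -> lt v2 y v1 -> False).
 { intros u1 u2 Hu1 Hu2 Hu12 Hpu Hyu.
   assert (Hu2y : u2 <> y).
   { intro; subst. apply lt_aa in Hyu. auto. }
   pose proof (lt_change u2 y u2 u1 Hu2y (lt_l _ _) Hyu (fun h => Hu12 (eq_sym h))) as E1.
   pose proof (lt_change o x u2 u1 Hox Hu2 Hu1 (fun h => Hu12 (eq_sym h))) as E2.
   apply Hpu. exists o. split; auto. apply E1, E2, lt_l. }
 destruct (classic (v1 = y)) as [->|Hv1y].
 { apply (key y v2); auto. apply lt_r. }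
 destruct (classic (v2 = y)) as [->|Hv2y].
 { apply (key y v1); auto. apply lt_r. }
 pose proof (line_lt L l1 l2 HLn Hl1 Hl2 Hl12) as HLe.
 set (Pi := hl (fun z => L z \/ z = x)).
 assert (HncL : nc l1 l2 x) by (split; auto; intro h; apply Hx, HLe; auto).
 assert (Hplane : is_plane X Lines Pi).
 { split. apply hull_flat. split.
   - exists [l1; l2; x]. split. simpl; lia. intros z Hz.
     pose proof (proj1 (hullLx L l1 l2 x HLn Hl1 Hl2 Hl12 z) Hz) as Hz2.
     apply (hull_mono (T3 l1 l2 x)); auto. intros w [->|[->| ->]]; simpl; auto.
   - intros m Hm [B [HB1 HB2]].
     destruct (list2 x B ltac:(lia)) as [p [q Hpq]].
     apply (nc_line l1 l2 x p q HncL); apply Hpq, HB2; apply hull_incl; auto. }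
 assert (HPo : Pi o) by (apply hull_incl; auto).
 assert (HPx : Pi x) by (apply hull_incl; auto).
 assert (HPv : forall v, lt o x v -> Pi v) by (intros v Hv; apply (hull_lt _ o x); auto).
 destruct (lt_line v1 y Hv1y) as [K1 [HK1 [HK1a [HK1b HK1e]]]].
 destruct (lt_line v2 y Hv2y) as [K2 [HK2 [HK2a [HK2b HK2e]]]].
 assert (Hs : set_eq X K1 K2).
 { apply (Pr Pi L y Hplane HLn); auto.
   - intros z Hz; apply hull_incl; auto.
   - intros z Hz. apply HK1e in Hz. split.
     + apply (hull_lt _ v1 y); [apply HPv; auto| exact Hy| exact Hz].
     + intro h; apply Hp1; exists z; auto.
   - intros z Hz. apply HK2e in Hz. split.
     + apply (hull_lt _ v2 y); [apply HPv; auto| exact Hy| exact Hz].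
     + intro h; apply Hp2; exists z; auto. }
 apply (key v1 v2); auto. apply HK2e, Hs; auto.
Qed.

Lemma M5 : proregular3 X Lines -> condition3 X Lines ->
 forall L l1 l2 x L1 L2 a, Lines L -> L l1 -> L l2 -> l1 <> l2 -> ~ L x ->
 Lines L1 -> Lines L2 -> L1 x -> L2 x ->
 (forall z, L1 z -> hl (T3 l1 l2 x) z /\ ~ L z) ->
 (forall z, L2 z -> hl (T3 l1 l2 x) z /\ ~ L z) ->
 L1 a -> ~ L2 a -> False.
Proof.
 intros PR C L l1 l2 x L1 L2 a HLn Hl1 Hl2 Hl12 Hx HL1 HL2 H1x H2x H1 H2 Ha Hna.
 assert (Hax : a <> x) by (intro; subst; auto).
 destruct (ax1 L2 HL2) as [b1 [b2 [Hb12 [Hb1 Hb2]]]].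
 assert (exists b, L2 b /\ b <> x) as [b [Hb Hbx]].
 { destruct (classic (b1 = x)); [exists b2; split; congruence| exists b1; auto]. }
 pose proof (line_lt L l1 l2 HLn Hl1 Hl2 Hl12) as HLe.
 assert (HncL : nc l1 l2 x) by (split; auto; intro h; apply Hx, HLe; auto).
 assert (HLP : forall z, L z -> hl (T3 l1 l2 x) z).
 { intros z Hz. apply (hull_lt _ l1 l2); try (apply hull_incl; unfold T3; auto). apply HLe; auto. }
 assert (exists o w, L o /\ lt o x w /\ w <> o /\ w <> x) as [o [w [Ho [Hw [Hwo Hwx]]]]].
 { apply NNPP; intro Hno.
   assert (Hfl: flat X Lines (fun z => L z \/ z = x)).
   { apply flat2. apply lines_flat; auto. intros [o [q [? [? [? ?]]]]]. apply Hno; exists o, q; auto. }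
   destruct (ax1 L1 HL1) as [c1 [c2 [Hc12 [Hc1 Hc2]]]].
   assert (Hc : forall c, L1 c -> c = x).
   { intros c Hc. destruct (H1 c Hc) as [HcP HcL].
     assert (L c \/ c = x).
     { apply (hull_min (T3 l1 l2 x) _ Hfl); auto. intros w [->|[->| ->]]; auto. }
     tauto. }
   apply Hc12. rewrite (Hc c1), (Hc c2); auto. }
 assert (HPi : forall z, hl (T3 l1 l2 x) z -> hl (fun w => L w \/ w = x) z).
 { intro z. apply (hullLx L l1 l2 x); auto. }
 assert (Hox : o <> x) by (intro; subst; auto).
 destruct (H1 a Ha) as [HaP HaL].
 assert (exists l, L l /\ lt w a l) as [l [Hl Hwal]].
 { apply NNPP; intro Hn.
   apply Hwx. symmetry.
   apply (C L o x a HLn Ho Hx (HPi a HaP) x w).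
   - split. apply lt_r. intros [w' [Hw' Lw']].
     apply (proj2 (H1 w' (lt_in L1 x a w' HL1 H1x Ha Hw'))); auto.
   - split; auto. intros [w' [? ?]]; apply Hn; exists w'; auto. }
 assert (Hwa : w <> a).
 { intro; subst w. assert (h : lt x a o).
   { apply (lt_change o x x a Hox (lt_r _ _) Hw (fun h => Hax (eq_sym h))). apply lt_l. }
   apply (proj2 (H1 o (lt_in L1 x a o HL1 H1x Ha h))); auto. }
 assert (Hla : l <> a) by (intro; subst; auto).
 pose proof (lt_change w a l a Hwa Hwal (lt_r _ _) Hla) as Eq1.
 assert (exists m c, L m /\ L2 c /\ lt m a c) as [m [c [Hm [Hc Hmac]]]].
 { apply NNPP; intro Hn.
   assert (Hon: ~ L2 o) by (intro h; apply (proj2 (H2 o h)); auto).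
   assert (Hxb : x <> b) by auto.
   assert (Ha2 : hl (fun z => L2 z \/ z = o) a).
   { apply (hullLx L2 x b o HL2 H2x Hb Hxb).
     apply (G PR l1 l2 x x b o HncL); auto.
     - apply hull_incl; unfold T3; auto.
     - apply (proj1 (H2 b Hb)).
     - split; auto. intro h; apply Hon. apply (lt_in L2 x b); auto. }
   apply Hwo. symmetry.
   apply (C L2 x o a HL2 H2x Hon Ha2 o w).
   - split. apply lt_r. intros [c [Hc1 Hc2]]. apply Hn; exists o, c; auto.
   - split. apply lt_sym; auto. intros [c [Hc1 Hc2]]. apply Hn; exists l, c; split; auto.
     split; auto. apply Eq1; auto. }
 apply Hna.
 assert (Hxa : hl (fun z => L z \/ z = a) x).
 { apply (hullLx L l1 l2 a HLn Hl1 Hl2 Hl12).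
   apply (G PR l1 l2 x l1 l2 a HncL); try (solve [apply hull_incl; unfold T3; auto]).
   exact HaP. split; auto. intro h; apply HaL, HLe; auto. }
 assert (a = c).
 { apply (C L m a x HLn Hm HaL Hxa a c).
   - split. apply lt_r. intros [w' [Hw' Lw']].
     apply (proj2 (H1 w' (lt_in L1 a x w' HL1 Ha H1x Hw'))); auto.
   - split; auto. intros [w' [Hw' Lw']].
     apply (proj2 (H2 w' (lt_in L2 c x w' HL2 Hc H2x Hw'))); auto. }
 subst; auto.
Qed.

Lemma T5p : proregular3 X Lines -> condition3 X Lines -> Proclus X Lines.
Proof.
 intros PR C P L x HP HLn HLP HPx HLx L1 L2 HL1 HL2 H1x H1s H2x H2s.
 destruct (ax1 L HLn) as [l1 [l2 [Hl12 [Hl1 Hl2]]]].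
 pose proof (line_lt L l1 l2 HLn Hl1 Hl2 Hl12) as HLe.
 assert (HncL : nc l1 l2 x) by (split; auto; intro h; apply HLx, HLe; auto).
 assert (HPsub: forall z, P z -> hl (T3 l1 l2 x) z).
 { destruct HP as [HPf [[B [HBlen HB]] _]].
   destruct (list3 x B HBlen) as [[p [q Hpq]]|[a [b [c [Habc Hsub]]]]].
   - exfalso. apply (nc_line l1 l2 x p q HncL); apply Hpq, HB; auto.
   - intros z Hz. apply (G PR a b c l1 l2 x Habc); try (apply Hsub, HB; auto); auto. }
 assert (A1 : forall z, L1 z -> hl (T3 l1 l2 x) z /\ ~ L z).
 { intros z Hz. destruct (H1s z Hz); auto. }
 assert (A2 : forall z, L2 z -> hl (T3 l1 l2 x) z /\ ~ L z).
 { intros z Hz. destruct (H2s z Hz); auto. }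
 intro z; split; intro Hz.
 - apply NNPP; intro Hn. apply (M5 PR C L l1 l2 x L1 L2 z); auto.
 - apply NNPP; intro Hn. apply (M5 PR C L l1 l2 x L2 L1 z); auto.
Qed.
End S.

Theorem theorem3p6p1 (X : Type) (Lines : (X -> Prop) -> Prop) :
  is_liner X Lines ->
  (Proclus X Lines <-> (proaffine X Lines /\ proregular3 X Lines)) /\
  ((proaffine X Lines /\ proregular3 X Lines) <-> condition3 X Lines).
Proof.
  intros HL. split; split.
  - intros Pr. pose proof (T1p X Lines HL Pr) as C.
    split; [apply T2p|apply T3p]; auto.
  - intros [PA PR]. apply T5p; auto. apply T4p; auto.
  - intros [PA PR]. apply T4p; auto.
  - intros C. split; [apply T2p|apply T3p]; auto.
Qed.
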